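(* Fix a wavelength $\lambda>0$, a numerical aperture $NA>0$ and a constant $A>0$. Let $P(\mathbf f)=1$ if $|\mathbf f|<NA/\lambda$ and $P(\mathbf f)=0$ otherwise ($\mathbf f=(f_x,f_y)\in\mathbb R^2$). Let $q_n\ge 0$ be an illumination intensity supported in the half-disk $\{\boldsymbol\rho=(\rho\cos\theta,\rho\sin\theta): 0\le\rho<NA/\lambda,\ \theta\in[\theta_0-\pi/2,\theta_0+\pi/2]\}$ with $\theta_0=0$. Define the phase transfer function $$\widetilde H_n(\mathbf f)=iA\iint q_n(\boldsymbol\rho)P^*(\boldsymbol\rho)\big[P(\boldsymbol\rho+\mathbf f)-P(\boldsymbol\rho-\mathbf f)\big]\,d^2\boldsymbol\rho ,$$ and the point spread function $H_n=\mathcal F^{-1}\widetilde H_n$. Let $u(x,y)=\operatorname{sign}(x)$ and let $g=H_n\otimes u$ be the filter response (2D convolution). Then the response magnitude is maximal along the $y$-axis: $|g(x,y)|\le |g(0,y)|$ for all $(x,y)\in\mathbb R^2$. In this sense $H_n$ is an edge detection filter for edges drawn along the $y$-axis.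
   Context: $\mathcal F^{-1}$ denotes the inverse 2D Fourier transform and $\otimes$ 2D convolution. The Fourier transform of $u$ is $\widetilde u(f_x,f_y)=\frac{1}{i f_x}$ concentrated on the line $f_y=0$ (i.e. $\frac{1}{if_x}\delta(f_y)$). $P$ is the aberration-free pupil of the objective lens; $q_n$ is the intensity of the incident oblique plane-wave illumination, and $\theta_0$ is the central illumination direction. *)

(* Defs.v *)
(* Complex numbers are represented explicitly as
   pairs (real part, imaginary part) in R * R, since the Lebesgue integral of
   MathComp-Analysis is real-valued; complex integrals are taken componentwise. *)
From mathcomp Require Import all_boot all_algebra.
From mathcomp Require Import all_classical all_reals all_analysis.
Import GRing.Theory Num.Theory.
Local Open Scope ring_scope.

Set Implicit Arguments.
Unset Strict Implicit.
Unset Printing Implicit Defensive.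

Section Defs.
Variable R : realType.

Definition cplx := (R * R)%type.
Definition cI : cplx := (0, 1).
Definition cmul (z w : cplx) : cplx :=
  (z.1 * w.1 - z.2 * w.2, z.1 * w.2 + z.2 * w.1).
Definition cinv (z : cplx) : cplx :=
  (z.1 / (z.1 ^+ 2 + z.2 ^+ 2), - z.2 / (z.1 ^+ 2 + z.2 ^+ 2)).
Definition cmod (z : cplx) : R := Num.sqrt (z.1 ^+ 2 + z.2 ^+ 2).
Definition cexp2pi (t : R) : cplx := (cos (2 * pi * t), sin (2 * pi * t)).

Definition vnorm (f : R * R) : R := Num.sqrt (f.1 ^+ 2 + f.2 ^+ 2).
Definition vadd (u v : R * R) : R * R := (u.1 + v.1, u.2 + v.2).
Definition vsub (u v : R * R) : R * R := (u.1 - v.1, u.2 - v.2).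

Definition leb2 := ((@lebesgue_measure R) \x (@lebesgue_measure R))%E.

(* aberration-free pupil: P(f) = 1 if |f| < NA/lambda, 0 otherwise.
   It is real-valued, so P^* = P. *)
Definition pupil (lam NA : R) (f : R * R) : R :=
  if vnorm f < NA / lam then 1 else 0.

Definition Htilde (lam NA A : R) (q : R * R -> R) (f : R * R) : cplx :=
  cmul cI (A * Rintegral leb2 setT
     (fun rho => q rho * pupil lam NA rho *
        (pupil lam NA (vadd rho f) - pupil lam NA (vsub rho f))), 0).

(* Fourier transform of u(x,y) = sign(x): (1/(i f_x)) delta(f_y); this is the
   coefficient 1/(i f_x) of delta(f_y). *)
Definition utilde_coef (fx : R) : cplx := cinv (cmul cI (fx, 0)).

(* Integrand (in f_x) of F^{-1}[Ht_n * u~] after integrating out delta(f_y),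
   i.e. f_y = 0:  Ht_n(f_x,0) (1/(i f_x)) e^{2 pi i (f_x x + 0 y)}. *)
Definition g_integrand (lam NA A : R) (q : R * R -> R) (x y fx : R) : cplx :=
  cmul (cmul (Htilde lam NA A q (fx, 0)) (utilde_coef fx))
       (cexp2pi (fx * x + 0 * y)).

(* filter response g = H_n (x) u = F^{-1}[ Ht_n * u~ ] (convolution theorem),
   with H_n = F^{-1} Ht_n; complex integral taken componentwise. *)
Definition response (lam NA A : R) (q : R * R -> R) (x y : R) : cplx :=
  (Rintegral (@lebesgue_measure R) setT (fun fx => (g_integrand lam NA A q x y fx).1),
   Rintegral (@lebesgue_measure R) setT (fun fx => (g_integrand lam NA A q x y fx).2)).

Definition in_half_disk (lam NA theta0 : R) (rho : R * R) : Prop :=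
  exists r theta : R,
    0 <= r /\ r < NA / lam /\
    theta0 - pi / 2 <= theta /\ theta <= theta0 + pi / 2 /\
    rho = (r * cos theta, r * sin theta).

End Defs.

(* Main.v *)
Require Import Defs.
From mathcomp Require Import all_boot all_algebra.
From mathcomp Require Import all_classical all_reals all_analysis.
From mathcomp Require Import ring lra.
Import GRing.Theory Num.Theory.
Import order.Order.TTheory.
Local Open Scope ring_scope.

Lemma Rintegral_le0 d (T : measurableType d) (R : realType)
  (mu : {measure set T -> \bar R}) (D : set T) (f : T -> R) :
  (forall x, D x -> f x <= 0) -> Rintegral mu D f <= 0.
Proof.
move=> fle; rewrite /Rintegral; apply: fine_le0.
have -> : (\int[mu]_(x in D) (f x)%:E = \int[mu]_(x in D) - (- f x)%:E)%E.
  by apply: eq_integral => x _; rewrite EFinN oppeK.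
rewrite integral_ge0N; last by move=> x Dx; rewrite lee_fin oppr_ge0 fle.
by rewrite oppe_le0; apply: integral_ge0 => x Dx; rewrite lee_fin oppr_ge0 fle.
Qed.

Section S.
Variable R : realType.
Variables lam NA A : R.
Variable q : R * R -> R.

Definition hh (fx : R) : R := Rintegral (@leb2 R) setT
     (fun rho => q rho * pupil lam NA rho *
        (pupil lam NA (vadd rho (fx,0)) - pupil lam NA (vsub rho (fx,0)))).
Definition kk (fx : R) : R := A * hh fx / fx.

Lemma prod_eq fx : cmul (Htilde lam NA A q (fx, 0)) (utilde_coef fx) = (kk fx, 0).
Proof.
rewrite /Htilde /utilde_coef /cmul /cinv /cI /kk -/(hh fx) /=.
have -> : 0 * fx - 1 * 0 = 0 :> R by ring.
have -> : 0 * 0 + 1 * fx = fx :> R by ring.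
rewrite expr0n add0r.
have [->|fx0] := eqVneq fx 0.
  by congr (_, _); rewrite !(mul0r, mulr0, subr0, add0r, expr0n, invr0, oppr0, addr0).
by congr (_, _); field; rewrite ?sqrf_eq0.
Qed.

Lemma gint_eq x y fx : g_integrand lam NA A q x y fx =
  (kk fx * cos (2 * pi * (fx * x)), kk fx * sin (2 * pi * (fx * x))).
Proof.
rewrite /g_integrand prod_eq /cmul /cexp2pi /= mul0r addr0.
by congr (_, _); ring.
Qed.

Lemma cmod_k fx : cmod (kk fx, 0) = `|kk fx|.
Proof. by rewrite /cmod /= expr0n addr0 sqrtr_sqr. Qed.


Hypothesis q0 : forall rho, 0 <= q rho.
Hypothesis qsupp : forall rho, ~ in_half_disk lam NA 0 rho -> q rho = 0.

Lemma q_x {rho} : q rho != 0 -> 0 <= rho.1.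
Proof.
move=> qn; case: (pselect (in_half_disk lam NA 0 rho)) => [|/qsupp]; last by move=> h; rewrite h eqxx in qn.
move=> [r [th [r0 [_ [h1 [h2 ->]]]]]] /=.
apply: mulr_ge0 => //; apply: cos_ge0_pihalf; apply/andP; split; lra.
Qed.

Lemma vnorm_le (rho : R * R) (fx : R) : 0 <= rho.1 -> 0 <= fx ->
  vnorm (vsub rho (fx, 0)) <= @vnorm R (vadd rho (fx, 0)).
Proof.
move=> h1 h2; rewrite /vnorm /= ler_sqrt; last by rewrite addr_ge0 // sqr_ge0.
rewrite subr0 addr0 lerD2r; nra.
Qed.

Lemma vnorm_le' (rho : R * R) (fx : R) : 0 <= rho.1 -> fx <= 0 ->
  vnorm (vadd rho (fx, 0)) <= @vnorm R (vsub rho (fx, 0)).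
Proof.
move=> h1 h2; rewrite /vnorm /= ler_sqrt; last by rewrite addr_ge0 // sqr_ge0.
rewrite subr0 addr0 lerD2r; nra.
Qed.

Lemma pupil_ge0 f : 0 <= pupil lam NA f.
Proof. by rewrite /pupil; case: ifP. Qed.

Lemma hh_le0 fx : 0 < fx -> hh fx <= 0.
Proof.
move=> fx0; apply: Rintegral_le0 => x _.
have [qz|qn] := eqVneq (q x) 0; first by rewrite qz !mul0r.
apply: mulr_ge0_le0; first by rewrite mulr_ge0 // pupil_ge0.
have hx := q_x qn : 0 <= x.1.
have hv := @vnorm_le x fx hx (ltW fx0).
rewrite /pupil; case: ifP => h; last by case: ifP.
by rewrite (le_lt_trans hv h) subrr.
Qed.

Lemma hh_ge0 fx : fx < 0 -> 0 <= hh fx.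
Proof.
move=> fx0; apply: Rintegral_ge0 => x _.
have [qz|qn] := eqVneq (q x) 0; first by rewrite qz !mul0r.
apply: mulr_ge0; first by rewrite mulr_ge0 // pupil_ge0.
have hx := q_x qn : 0 <= x.1.
have hv := @vnorm_le' x fx hx (ltW fx0).
rewrite /pupil; case: ifP => h; case: ifP => h'; rewrite ?subrr ?subr0 ?ler01 //.
by rewrite (le_lt_trans hv h') in h.
Qed.

Hypothesis A0 : 0 < A.

Lemma kk_le0 fx : kk fx <= 0.
Proof.
rewrite /kk; have [fx0|fx0|->] := ltgtP fx 0.
- apply: mulr_ge0_le0; first by apply: mulr_ge0; [exact: ltW | exact: hh_ge0].
  by rewrite invr_le0 ltW.
- apply: mulr_le0_ge0; first by apply: mulr_ge0_le0; [exact: ltW | exact: hh_le0].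
  by rewrite invr_ge0 ltW.
- by rewrite invr0 mulr0.
Qed.

Notation mu := (@lebesgue_measure R).

Hypothesis Hint : mu.-integrable setT
     (fun fx => (cmod (cmul (Htilde lam NA A q (fx, 0)) (utilde_coef fx)))%:E).

Lemma Iabs : mu.-integrable setT (fun fx => (`|kk fx|)%:E).
Proof.
have E : (fun fx => (cmod (cmul (Htilde lam NA A q (fx, 0)) (utilde_coef fx)))%:E)
   = (fun fx => (`|kk fx|)%:E) by apply/funext => fx; rewrite prod_eq cmod_k.
by rewrite -E.
Qed.

Lemma Ik : mu.-integrable setT (EFin \o kk).
Proof.
have -> : EFin \o kk = -%E \o (fun fx => (`|kk fx|)%:E).
  by apply/funext => fx /=; rewrite ler0_norm ?kk_le0 // opprK.
exact: integrableN Iabs.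
Qed.

Lemma mk : measurable_fun setT kk.
Proof. apply/measurable_realfun.measurable_EFinP; exact: (measurable_int mu Ik). Qed.

Lemma Ikg (g : R -> R) (M : R) : measurable_fun setT g -> (forall x, `|g x| <= M) ->
  mu.-integrable setT (EFin \o (fun x => kk x * g x)).
Proof.
move=> mg gM.
have M0 : 0 <= M by apply: le_trans (gM 0).
apply: (@le_integrable _ _ _ mu setT measurableT _ (fun x => (M%:E * (EFin \o kk) x)%E)).
- apply/measurable_realfun.measurable_EFinP.
  exact: measurable_realfun.measurable_funM mk mg.
- move=> x _ /=; rewrite lee_fin !normrM.
  by rewrite (ger0_norm M0) mulrC ler_wpM2r.
- exact: integrableZl Ik.
Qed.

Lemma mcos (x : R) : measurable_fun setT (fun fx : R => cos (2 * pi * (fx * x))).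
Proof.
apply: measurableT_comp; first exact: measurable_realfun.continuous_measurable_fun (@continuous_cos R).
apply: measurableT_comp => //.
exact: measurable_realfun.mulrr_measurable.
Qed.

Lemma msin (x : R) : measurable_fun setT (fun fx : R => sin (2 * pi * (fx * x))).
Proof.
apply: measurableT_comp; first exact: measurable_realfun.continuous_measurable_fun (@continuous_sin R).
apply: measurableT_comp => //.
exact: measurable_realfun.mulrr_measurable.
Qed.

Lemma key (c s : R -> R) : measurable_fun setT c -> measurable_fun setT s ->
  (forall t, c t ^+ 2 + s t ^+ 2 = 1) ->
  Num.sqrt ((Rintegral mu setT (fun x => kk x * c x)) ^+ 2 +
            (Rintegral mu setT (fun x => kk x * s x)) ^+ 2)
  <= - Rintegral mu setT kk.
Proof.
move=> mc ms cs1.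
set a := Rintegral mu setT (fun x => kk x * c x).
set b := Rintegral mu setT (fun x => kk x * s x).
set I := Rintegral mu setT kk.
have cb t : `|c t| <= 1.
  rewrite ler_norml; have := cs1 t; have := sqr_ge0 (s t); move=> h1 h2.
  apply/andP; split; nra.
have sb t : `|s t| <= 1.
  rewrite ler_norml; have := cs1 t; have := sqr_ge0 (c t); move=> h1 h2.
  apply/andP; split; nra.
have ic := @Ikg c 1 mc cb.
have is_ := @Ikg s 1 ms sb.
have Ea : Rintegral mu setT (fun x => kk x * (a * c x)) = a ^+ 2.
  rewrite expr2 -RintegralZl //; apply: eq_Rintegral => x _ /=; ring.
have Eb : Rintegral mu setT (fun x => kk x * (b * s x)) = b ^+ 2.
  rewrite expr2 -RintegralZl //; apply: eq_Rintegral => x _ /=; ring.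
have mac : measurable_fun setT (fun x => a * c x) by apply: measurableT_comp.
have mbs : measurable_fun setT (fun x => b * s x) by apply: measurableT_comp.
have iac : mu.-integrable setT (EFin \o (fun x => kk x * (a * c x))).
  by apply: (@Ikg _ `|a|) => // x; rewrite normrM ler_piMr.
have ibs : mu.-integrable setT (EFin \o (fun x => kk x * (b * s x))).
  by apply: (@Ikg _ `|b|) => // x; rewrite normrM ler_piMr.
have H1 : a ^+ 2 + b ^+ 2 = Rintegral mu setT (fun x => kk x * (a * c x + b * s x)).
  rewrite -Ea -Eb -RintegralD //; apply: eq_Rintegral => x _ /=; ring.
set r := Num.sqrt (a ^+ 2 + b ^+ 2).
have S0 : 0 <= a ^+ 2 + b ^+ 2 by rewrite addr_ge0 // sqr_ge0.
have r0 : 0 <= r by apply: sqrtr_ge0.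
have rS : r ^+ 2 = a ^+ 2 + b ^+ 2 by rewrite sqr_sqrtr.
have H2 : Rintegral mu setT (fun x => kk x * (a * c x + b * s x)) <=
          Rintegral mu setT (fun x => kk x * (- r)).
  apply: le_Rintegral => //.
  - apply: (@Ikg _ (`|a| + `|b|)).
      exact: measurable_realfun.measurable_funD.
    move=> x; apply: le_trans (ler_normD _ _) _.
    by apply: lerD; rewrite normrM ler_piMr.
  - by apply: (@Ikg _ `|r|) => // x; rewrite normrN.
  - move=> x _; apply: ler_wnM2l; first exact: kk_le0.
    have := cs1 x; have := sqr_ge0 (a * s x - b * c x) => h1 h2.
    have CS : (a * c x + b * s x) ^+ 2 <= r ^+ 2 by rewrite rS; nra.
    nra.
have H3 : Rintegral mu setT (fun x => kk x * (- r)) = I * (- r).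
  by rewrite RintegralZr //; exact: Ik.
have I0 : I <= 0 by apply: Rintegral_le0 => x _; exact: kk_le0.
have HH : a ^+ 2 + b ^+ 2 <= I * (- r) by rewrite H1 -H3.
clear H1 H2 H3 Ea Eb.
nra.
Qed.

Lemma main x y : cmod (response lam NA A q x y) <= cmod (response lam NA A q 0 y).
Proof.
have E1 x' : (fun fx => (g_integrand lam NA A q x' y fx).1) =
   (fun fx => kk fx * cos (2 * pi * (fx * x'))) by apply/funext => fx; rewrite gint_eq.
have E2 x' : (fun fx => (g_integrand lam NA A q x' y fx).2) =
   (fun fx => kk fx * sin (2 * pi * (fx * x'))) by apply/funext => fx; rewrite gint_eq.
rewrite /response !E1 !E2.
have -> : (fun fx => kk fx * cos (2 * pi * (fx * 0))) = kk.
  by apply/funext => fx; rewrite !mulr0 cos0 mulr1.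
have -> : (fun fx => kk fx * sin (2 * pi * (fx * 0))) = (fun _ => 0).
  by apply/funext => fx; rewrite !mulr0 sin0 mulr0.
rewrite Rintegral_cst // mul0r /cmod /= expr0n addr0 sqrtr_sqr ler0_norm; last first.
  by apply: Rintegral_le0 => t _; exact: kk_le0.
apply: key.
- exact: mcos.
- exact: msin.
- by move=> t; rewrite cos2Dsin2.
Qed.

End S.

Theorem lemma1 (R : realType) (lam NA A : R) (q : R * R -> R) :
  0 < lam -> 0 < NA -> 0 < A ->
  (* q_n : nonnegative, measurable, integrable intensity *)
  measurable_fun setT q ->
  (forall rho, 0 <= q rho) ->
  (@leb2 R).-integrable setT (fun rho => (q rho)%:E) ->
  (* supported in the half-disk with theta0 = 0 *)
  (forall rho, ~ in_half_disk lam NA 0 rho -> q rho = 0) ->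
  (* well-definedness of g = F^{-1}[Ht_n u~] as a Lebesgue integral *)
  (@lebesgue_measure R).-integrable setT
     (fun fx => (cmod (cmul (Htilde lam NA A q (fx, 0)) (utilde_coef fx)))%:E) ->
  forall x y : R,
    cmod (response lam NA A q x y) <= cmod (response lam NA A q 0 y).
Proof.
move=> _ _ A0 _ q0 _ qs Hi x y.
exact: main.
Qed.
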